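(* Let $m\in\mathbb N$ and let $\xi_1,\dots,\xi_m$ be real random variables with partial sums $S_0=0$, $S_k=\xi_1+\dots+\xi_k$ ($1\le k\le m$). Assume (i) $S_m=0$ a.s.; (ii) for every cyclic permutation $\pi$ of $\{1,\dots,m\}$, $(\xi_1,\dots,\xi_m)$ and $(\xi_{\pi(1)},\dots,\xi_{\pi(m)})$ have the same distribution; (iii) for every $1\le k\le m-1$ the distribution of $S_k$ has no atoms. Then $$\mathbb P(S_1>0,\dots,S_{m-1}>0)=\frac1m.$$
   Context: A cyclic permutation of $\{1,\dots,m\}$ is a permutation whose cycle decomposition consists of exactly one cycle. *)

(* Defs.v *)
From HB Require Import structures.
From mathcomp Require Import all_boot all_order all_algebra all_fingroup.
From mathcomp Require Import all_classical all_reals all_analysis.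
Set Implicit Arguments. Unset Strict Implicit. Unset Printing Implicit Defensive.
Import Order.TTheory GRing.Theory Num.Theory.

Definition cyclic_perm (T : finType) (s : {perm T}) : bool :=
  #|porbits s| == 1%N.

Local Open Scope ring_scope.

(* Partial sums: for xi indexed by 'I_m (xi i = \xi_{i+1}),
   partial_sum xi k w = xi_1 w + ... + xi_k w. *)
Definition partial_sum (T : Type) (R : realType) (m : nat)
  (xi : 'I_m -> T -> R) (k : nat) (w : T) : R :=
  \sum_(i < m | (i < k)%N) xi i w.

Definition perm_vec (T : Type) (R : realType) (m : nat)
  (xi : 'I_m -> T -> R) (s : {perm 'I_m}) (w : T) : m.-tuple R :=
  [tuple xi (s i) w | i < m].

(* Main.v *)
Require Import Defs.
From HB Require Import structures.
From mathcomp Require Import all_boot all_order all_algebra all_fingroup.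
From mathcomp Require Import all_classical all_reals all_analysis.
From mathcomp Require Import zify.
Import Order.TTheory GRing.Theory Num.Theory.
Local Open Scope classical_set_scope.
Local Open Scope ring_scope.

Definition ordmod (n t : nat) : 'I_n.+1 := inord (t %% n.+1)%N.

Lemma val_ordmod n t : (ordmod n t : nat) = (t %% n.+1)%N.
Proof. by rewrite /ordmod inordK // ltn_pmod. Qed.

Lemma ordmod_ord n (i : 'I_n.+1) : ordmod n i = i.
Proof. by apply: val_inj => /=; rewrite val_ordmod modn_small. Qed.

Lemma ordmodD n t : ordmod n (t + n.+1) = ordmod n t.
Proof. by apply: val_inj => /=; rewrite !val_ordmod modnDr. Qed.

Definition sigm n : {perm 'I_n.+1} := perm (@ordS_inj n.+1).

Lemma sigm_exp n k (x : 'I_n.+1) : ((sigm n ^+ k)%g x) = ordmod n (x + k).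
Proof.
elim: k => [|k IH]; first by rewrite expg0 perm1 addn0 ordmod_ord.
rewrite expgSr permM IH permE; apply: val_inj.
by rewrite /= !val_ordmod addnS -[((x+k) %% _).+1]addn1 modnDml addn1.
Qed.

Lemma sigm_cyclic n : cyclic_perm (sigm n).
Proof.
rewrite /cyclic_perm.
have -> : porbits (sigm n) = [set porbit (sigm n) ord0]%SET.
  apply/setP => A; rewrite inE; apply/imsetP/eqP => [[x _ ->]|->].
    have -> : x = ((sigm n ^+ x)%g ord0) by rewrite sigm_exp add0n ordmod_ord.
    by rewrite porbit_perm.
  by exists ord0.
by rewrite cards1.
Qed.

Section Det.
Variable R : realType.
Variable n : nat.
Variable y : nat -> R.
Hypothesis hy : forall t, y (t + n.+1) = y t.
Let S t := \sum_(i < t) y i.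

Lemma Ssplit j k : \sum_(i < k) y (i + j) = S (j + k) - S j.
Proof.
elim: k => [|k IH]; first by rewrite big_ord0 addn0 subrr.
rewrite big_ord_recr /= IH /S addnS big_ord_recr /= addnC.
by rewrite addrAC.
Qed.

Hypothesis S0 : S n.+1 = 0.

Lemma Sper t : S (t + n.+1) = S t.
Proof.
have := Ssplit n.+1 t; rewrite S0 subr0 addnC => <-.
by apply: eq_bigr => i _; rewrite hy.
Qed.

Lemma char1 j : (j <= n)%N ->
  (forall k, (1 <= k <= n)%N -> 0 < S (j + k) - S j) ->
  forall t, (t <= n)%N -> t != j -> S j < S t.
Proof.
move=> jn H t tn tj; rewrite -subr_gt0.
case: (ltngtP t j) tj => // [tlj|jlt] _.
  have := H (t + n.+1 - j)%N.
  have -> : (j + (t + n.+1 - j) = t + n.+1)%N by lia.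
  rewrite Sper; apply; apply/andP; split; lia.
have := H (t - j)%N; rewrite subnKC ?(ltnW jlt) //; apply.
by rewrite subn_gt0 jlt /= (leq_trans (leq_subr _ _) tn).
Qed.

Lemma char2 j : (j <= n)%N ->
  (forall t, (t <= n)%N -> t != j -> S j < S t) ->
  (forall k, (1 <= k <= n)%N -> 0 < S (j + k) - S j).
Proof.
move=> jn H k /andP[k1 kn]; rewrite subr_gt0.
case: (leqP (j + k) n) => jk.
  by apply: H => //; rewrite -{2}[j]addn0 eqn_add2l -lt0n.
have -> : (j + k = (j + k - n.+1) + n.+1)%N by rewrite subnK.
rewrite Sper; apply: H.
  lia.
rewrite neq_ltn; apply/orP; left; lia.
Qed.

End Det.

Lemma exmin (R : realType) (f : nat -> R) n :
  exists j, (j <= n)%N /\ forall t, (t <= n)%N -> f j <= f t.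
Proof.
elim: n => [|n [j [jn H]]]; first by exists 0%N; split => // t; rewrite leqn0 => /eqP ->.
case: (leP (f j) (f n.+1)) => hj.
  exists j; split; first by rewrite (leq_trans jn).
  move=> t; rewrite leq_eqVlt ltnS => /orP[/eqP->|]//; exact: H.
exists n.+1; split => // t; rewrite leq_eqVlt ltnS => /orP[/eqP->|/H] //.
by move=> /(le_trans (ltW hj)).
Qed.

Definition rotv (n : nat) (R : Type) (v : n.+1.-tuple R) : n.+1.-tuple R :=
  [tuple tnth v (ordS i) | i < n.+1].

Lemma tnth_iter_rot n R j (v : n.+1.-tuple R) i :
  tnth (iter j (@rotv n R) v) i = tnth v (ordmod n (i + j)).
Proof.
elim: j i => [|j IH] i; first by rewrite addn0 ordmod_ord.
rewrite iterS tnth_mktuple IH; congr tnth; apply: val_inj => /=.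
by rewrite !val_ordmod /= modnDml addSn addnS.
Qed.

Definition Fk (n : nat) (R : realType) (k : nat) (v : n.+1.-tuple R) : R :=
  \sum_(i < n.+1) (if (i < k)%N then tnth v i else 0).
Arguments Fk {n R}.

Lemma sum_cut (R : realType) n (g : nat -> R) k : (k <= n.+1)%N ->
  \sum_(i < n.+1) (if (i < k)%N then g i else 0) = \sum_(i < k) g i.
Proof. by move=> kn; rewrite (big_ord_widen n.+1 g kn) [RHS]big_mkcond. Qed.

Lemma mFk (R : realType) n k : measurable_fun setT (@Fk n R k).
Proof.
rewrite /Fk; apply: (measurable_sum (index_enum 'I_n.+1) (h := fun (i : 'I_n.+1) (v : n.+1.-tuple R) =>
   if (i < k)%N then tnth v i else 0)) => i.
by case: (nat_of_ord i < k)%N; [exact: measurable_tnth | exact: measurable_cst].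
Qed.

Lemma measure_setIC0 d (T : measurableType d) (R : realType) (P : probability T R)
  (A N : set T) : measurable A -> measurable N -> P N = 0%E -> P (A `&` ~` N) = P A.
Proof.
move=> mA mN PN.
have hAN : P (A `&` N) = 0%E.
  apply/eqP; rewrite -measure_le0 -PN; apply: le_measure; rewrite ?inE //;
    by [apply: measurableI | move=> x []].
have e : P A = (P (A `&` ~` N) + P (A `&` N))%E.
  rewrite -measureU.
  - congr (P _); apply/seteqP; split => x.
      by move=> Ax; case: (pselect (N x)) => Nx; [right|left].
    by case=> -[].
  - by apply: measurableI => //; exact: measurableC.
  - exact: measurableI.
  - by apply/seteqP; split => x // [[_ nN] [_ Nx]].
by rewrite e hAN adde0.
Qed.

Theorem mainTheorem8 (d : measure_display) (T : measurableType d)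
  (R : realType) (P : probability T R) (m : nat) (xi : 'I_m -> {RV P >-> R}) :
  (0 < m)%N ->
  {ae P, forall w, partial_sum (fun i => xi i : T -> R) m w = 0} ->
  (forall s : {perm 'I_m}, cyclic_perm s ->
     forall B : set (m.-tuple R), measurable B ->
       P (perm_vec (fun i => xi i : T -> R) 1%g @^-1` B) =
       P (perm_vec (fun i => xi i : T -> R) s @^-1` B)) ->
  (forall k : nat, (1 <= k <= m.-1)%N -> forall x : R,
     P (partial_sum (fun i => xi i : T -> R) k @^-1` [set x]) = 0%E) ->
  P [set w | forall k : nat, (1 <= k <= m.-1)%N ->
               0 < partial_sum (fun i => xi i : T -> R) k w] = (m%:R^-1)%:E.
Proof.
case: m xi => [//|n] xi _ hae hcyc hatom /=.
set xf := (fun i => xi i : T -> R).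
set X := perm_vec xf 1%g.
have tX w i : tnth (X w) i = xi i w by rewrite tnth_mktuple perm1.
have mX : measurable_fun setT X.
  apply/measurable_fun_tnthP => i.
  have -> : (tnth (T:=R))^~ i \o X = xi i by apply/funext => w /=; rewrite tX.
  exact: measurable_funPT.
have mrot : measurable_fun setT (@rotv n R).
  apply/measurable_fun_tnthP => i.
  have -> : (tnth (T:=R))^~ i \o (@rotv n R) = (tnth (T:=R))^~ (ordS i).
    by apply/funext => v /=; rewrite tnth_mktuple.
  exact: measurable_tnth.
have miter j : measurable_fun setT (iter j (@rotv n R)).
  elim: j => [|j IH]; first exact: measurable_id.
  exact: (measurableT_comp mrot IH).
have mpre (f : n.+1.-tuple R -> n.+1.-tuple R) B :
    measurable_fun setT f -> measurable B -> measurable (f @^-1` B).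
  by move=> mf mB; rewrite -[_ @^-1` _]setTI; apply: mf.
have mpreX B : measurable B -> measurable (X @^-1` B).
  by move=> mB; rewrite -[_ @^-1` _]setTI; apply: mX.
have hrot B : measurable B -> P (X @^-1` B) = P (X @^-1` (@rotv n R @^-1` B)).
  move=> mB; rewrite (hcyc _ (sigm_cyclic n) B mB); congr (P _).
  have -> : perm_vec xf (sigm n) = @rotv n R \o X.
    apply/funext => w; apply: eq_from_tnth => i /=; by rewrite !tnth_mktuple /sigm permE perm1.
  by [].
have hiter j B : measurable B -> P (X @^-1` B) = P (X @^-1` (iter j (@rotv n R) @^-1` B)).
  elim: j B => [//|j IH] B mB.
  by rewrite (hrot B mB) (IH _ (mpre _ _ mrot mB)).
set rot := @rotv n R.
set y := fun w t => xf (ordmod n t) w.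
set S := fun w t => \sum_(i < t) y w i.
have hy w t : y w (t + n.+1)%N = y w t by rewrite /y ordmodD.
have eq_ps k w : (k <= n.+1)%N -> partial_sum xf k w = S w k.
  move=> kn; rewrite /partial_sum /S big_mkcond /= -(@sum_cut R n (y w) k kn).
  by apply: eq_bigr => i _; rewrite /y ordmod_ord.
have FkX k j w : (k <= n.+1)%N -> Fk k (iter j rot (X w)) = S w (j + k)%N - S w j.
  move=> kn; rewrite /Fk.
  under eq_bigr => i _ do rewrite tnth_iter_rot tX.
  by rewrite (@sum_cut R n (fun t => y w (t + j)%N) k kn) (@Ssplit R (y w)).
have psF k w : (k <= n.+1)%N -> partial_sum xf k w = Fk k (X w).
  by move=> kn; rewrite eq_ps // (FkX k 0%N w kn) /S big_ord0 subr0.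
set B1 := [set v : n.+1.-tuple R | forall k, (1 <= k <= n)%N -> 0 < Fk k v].
have mB1 : measurable B1.
  have -> : B1 = \bigcap_k [set v | (1 <= k <= n)%N -> 0 < Fk k v].
    by apply/seteqP; split => v /= H k; [move=> _; apply: H | apply: H].
  apply: bigcapT_measurable => k /=.
  case: (1 <= k <= n)%N.
    have -> : [set v : n.+1.-tuple R | true -> 0 < Fk k v] = Fk k @^-1` `]0, +oo[.
      apply/seteqP; split => v /=; rewrite in_itv /= andbT.
        by move=> H; apply: H.
      by move=> H _.
    rewrite -[_ @^-1` _]setTI; apply: mFk => //; exact: measurable_itv.
  have -> : [set v : n.+1.-tuple R | false -> 0 < Fk k v] = setT.
    by apply/seteqP; split => v.
  exact: measurableT.
have -> : [set w | forall k, (0 < k <= n)%N -> 0 < partial_sum xf k w] = X @^-1` B1.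
  apply/seteqP; split => w /= H k hk; move: (H k hk); rewrite psF //; lia.
have mB0 k : measurable (Fk k @^-1` [set (0:R)]).
  by rewrite -[_ @^-1` _]setTI; apply: mFk => //; exact: measurable_set1.
set E := fun a b : nat => X @^-1` (iter a rot @^-1` (Fk (b - a)%N @^-1` [set 0])).
have hE a b : (a < b <= n)%N -> P (E a b) = 0%E.
  move=> hab; rewrite /E -hiter //.
  have -> : X @^-1` (Fk (b - a)%N @^-1` [set 0]) =
            partial_sum xf (b - a)%N @^-1` [set 0].
    by apply/seteqP; split => w /=; rewrite psF //; lia.
  apply: hatom; lia.
have hneg : P.-negligible (~` [set w | partial_sum xf n.+1 w = 0] `|`
    \bigcup_a \bigcup_b (if (a < b <= n)%N then E a b else set0)).
  apply: negligibleU; first exact: hae.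
  apply: negligible_bigcup => a; apply: negligible_bigcup => b.
  case: ifP => hab; last exact: negligible_set0.
  exists (E a b); split => //; last exact: hE.
  by apply: mpreX; apply: mpre => //.
have [N [mN PN0 badN]] := hneg.
have hS0 w : ~ N w -> S w n.+1 = 0.
  move=> Nw; rewrite -eq_ps //.
  case: (eqVneq (partial_sum xf n.+1 w) 0) => // hne; exfalso.
  by apply: Nw; apply: badN; left => /= he; rewrite he eqxx in hne.
have hdist w a b : ~ N w -> (a < b <= n)%N -> S w a != S w b.
  move=> Nw hab; apply/negP => /eqP e; apply: Nw; apply: badN; right.
  exists a => //; exists b => //; rewrite hab /E /=.
  rewrite FkX; last lia.
  have -> : (a + (b - a) = b)%N by lia.
  by rewrite e subrr.
set A := fun j : nat => X @^-1` (iter j rot @^-1` B1).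
have mA j : measurable (A j) by apply: mpreX; apply: mpre.
have hA j : P (A j) = P (X @^-1` B1) by rewrite /A -hiter.
have Achar w j : ~ N w -> (j <= n)%N ->
    A j w <-> (forall t, (t <= n)%N -> t != j -> S w j < S w t).
  move=> Nw jn; split.
  - move=> Aj; apply: (@char1 R n (y w) (hy w) (hS0 w Nw) j jn) => k hk.
    move: (Aj k hk); rewrite FkX; last lia.
    exact: id.
  - move=> H k hk; rewrite /A /= FkX; last lia.
    exact: (@char2 R n (y w) (hy w) (hS0 w Nw) j jn H k hk).
have hG : \big[setU/set0]_(j < n.+1) (A j `&` ~` N) = ~` N.
  rewrite -(bigcup_mkord n.+1 (fun j => A j `&` ~` N)).
  apply/seteqP; split => w.
    by case=> j _ [].
  move=> Nw; have [j [jn hmin]] := @exmin R (S w) n.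
  exists j; first by rewrite /= ltnS.
  split => //; apply/(Achar w j Nw jn) => t tn tj.
  rewrite lt_neqAle hmin // andbT.
  case: (ltngtP t j) tj => // htj _.
    by rewrite eq_sym; apply: hdist => //; lia.
  by apply: hdist => //; lia.
have htriv : trivIset (fun _ : 'I_n.+1 => true) (fun j : 'I_n.+1 => A j `&` ~` N).
  move=> i j _ _ [w [[Ai Nw] [Aj _]]].
  have io : (i <= n)%N by rewrite -ltnS.
  have jo : (j <= n)%N by rewrite -ltnS.
  apply: val_inj => /=; apply/eqP; apply/negP => /negP hij.
  have h1 : S w i < S w j by apply: (proj1 (Achar w i Nw io) Ai j jo); rewrite eq_sym.
  have h2 := proj1 (Achar w j Nw jo) Aj i io hij.
  by move: (lt_trans h1 h2); rewrite ltxx.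
have hsum : P (\big[setU/set0]_(j < n.+1) (A j `&` ~` N)) =
    (\sum_(j < n.+1) P (A j `&` ~` N))%E.
  apply: (measure_bigsetU_ord_cond P (P := xpredT)) => // j _.
  by apply: measurableI => //; exact: measurableC.
have PG : P (~` N) = 1%E.
  by rewrite -[~` N]setTI measure_setIC0 // probability_setT.
have e1 : 1%E = (\sum_(j < n.+1) P (X @^-1` B1))%E.
  rewrite -PG -hG hsum; apply: eq_bigr => j _.
  by rewrite measure_setIC0 // hA.
set p := P (X @^-1` B1) in e1 *.
have p0 : (0 <= p)%E := measure_ge0 _ _.
have p1 : (p <= 1)%E := probability_le1 P (mpreX _ mB1).
have pfin : p \is a fin_num by rewrite ge0_fin_numE // (le_lt_trans p1) // ltry.
move: e1; rewrite -(fineK pfin) sumEFin => /eqP; rewrite eqe => /eqP hr.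
rewrite -(fineK pfin); congr EFin.
move: hr; rewrite sumr_const card_ord => hr.
have nz : (n.+1%:R : R) != 0 by rewrite pnatr_eq0.
by apply: (mulIf nz); rewrite mulr_natr -hr mulVf.
Qed.
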